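(* Let $\mathcal{P}$ be a $\delta^+$-common vertex property with associated constant $d(\mathcal{P})$, let $k\geq 1$, $\ell\geq 2$, and let $G$ be a finite digraph with $\delta^+(G)\geq d(\mathcal{P})+2k\ell^k$. Then $G$ contains a subgraph $B$ isomorphic to $B^+_{k,\ell}$ such that every leaf of $B$ satisfies $\mathcal{P}$ in $G$.
   Context: Digraphs are finite, have no loops and no multiple copies of the same edge, but may contain two edges in opposite directions between a pair of vertices. $\delta^+(G)$ is the minimum out-degree. A vertex property $\mathcal{P}$ (a property of a pair (digraph, vertex of it)) is $\delta^+$-common if (i) there is an integer $d=d(\mathcal{P})$ such that every digraph $G$ with $\delta^+(G)\geq d$ contains a vertex satisfying $\mathcal{P}$ in $G$, and (ii) $\mathcal{P}$ is anti-monotone: whenever $H$ is a subgraph of $G$ and $v\in V(H)$ satisfies $\mathcal{P}$ in $H$, then $v$ satisfies $\mathcal{P}$ in $G$. $B^+_{k,\ell}$ is the complete $\ell$-ary tree of depth $k$ (distance from root to leaves $k$) with all edges oriented away from the root; its leaves are the $\ell^k$ vertices at depth $k$. *)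

(* Defs.v *)
From mathcomp Require Import all_boot.
Set Implicit Arguments. Unset Strict Implicit. Unset Printing Implicit Defensive.

(* Opposite edges (x,y),(y,x) are allowed; multiple edges are impossible. *)
Definition digraph (T : finType) (V : {set T}) (E : {set T * T}) : Prop :=
  [/\ V != set0,
      (forall x y, (x, y) \in E -> (x \in V) && (y \in V))
    & (forall x, (x, x) \notin E)].

Definition outdeg (T : finType) (E : {set T * T}) (x : T) : nat :=
  #|[set y | (x, y) \in E]|.

Definition min_outdeg_ge (T : finType) (V : {set T}) (E : {set T * T}) (d : nat) :=
  forall x, x \in V -> d <= outdeg E x.

Definition subgraph (T : finType) (V' : {set T}) (E' : {set T * T})
  (V : {set T}) (E : {set T * T}) : Prop :=
  V' \subset V /\ E' \subset E.

Definition vertex_property :=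
  forall T : finType, {set T} -> {set T * T} -> T -> Prop.

Definition delta_common (P : vertex_property) (d : nat) : Prop :=
  (forall (T : finType) (V : {set T}) (E : {set T * T}),
      digraph V E -> min_outdeg_ge V E d -> exists2 v, v \in V & P T V E v)
  /\
  (forall (T : finType) (V : {set T}) (E : {set T * T}) (V' : {set T}) (E' : {set T * T}) v,
      digraph V E -> digraph V' E' -> subgraph V' E' V E ->
      v \in V' -> P T V' E' v -> P T V E v).

(* B^+_{k,l}: vertices are the words over 'I_l of length <= k, the root is
   the empty word, and the edges are s -> rcons s i (oriented away from the
   root). Leaves are the words of length exactly k. *)
Definition outtree_vertex (k : nat) (l : nat) (s : seq 'I_l) : bool := size s <= k.
Definition outtree_leaf (k : nat) (l : nat) (s : seq 'I_l) : bool := size s == k.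

(* f maps B^+_{k,l} isomorphically onto a subgraph of (V, E): f is injective
   on the tree's vertices, lands in V, and maps tree edges to edges of E.
   (The image of f together with the images of the tree edges is then a
   subgraph B of G isomorphic to B^+_{k,l}.) *)
Definition outtree_embedding (T : finType) (V : {set T}) (E : {set T * T})
  (k l : nat) (f : seq 'I_l -> T) : Prop :=
  [/\ {in @outtree_vertex k l, injective f},
      (forall s, @outtree_vertex k l s -> f s \in V)
    & (forall s (i : 'I_l), size s < k -> (f s, f (rcons s i)) \in E)].

(* Main.v *)
Require Import Defs.
From mathcomp Require Import all_boot.
From mathcomp Require Import zify.
From Stdlib Require Import ClassicalEpsilon Classical.

Definition pb (Q : Prop) : bool := if excluded_middle_informative Q then true else false.
Lemma pbP (Q : Prop) : reflect Q (pb Q).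
Proof. rewrite /pb; case: excluded_middle_informative => h; constructor => //. Qed.

Fixpoint Pj (P : vertex_property) (m j : nat) : vertex_property :=
  match j with
  | 0 => P
  | j'.+1 => fun T V E v => exists S : {set T}, m <= #|S| /\
       forall y, y \in S -> (v, y) \in E /\ Pj P m j' T V E y
  end.

Set Implicit Arguments. Unset Strict Implicit. Unset Printing Implicit Defensive.

Definition antimono (P : vertex_property) :=
  (forall (T : finType) (V : {set T}) (E : {set T * T}) (V' : {set T}) (E' : {set T * T}) v,
      digraph V E -> digraph V' E' -> subgraph V' E' V E ->
      v \in V' -> P T V' E' v -> P T V E v).

Lemma Pj_mono P m j : antimono P -> antimono (Pj P m j).
Proof.
move=> hP; elim: j => [|j IH] //= T V E V' E' v hG hG' [sV sE] vV [S [hS hy]].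
exists S; split => // y yS; have [e py] := hy y yS; split.
  by apply: (subsetP sE).
have := hG'; case=> _ h _; have /andP[_ yV'] := h _ _ e.
by apply: (IH T V E V' E' y hG hG').
Qed.

Lemma Pj_common P d m j : delta_common P d -> delta_common (Pj P m j) (d + j * m).
Proof.
move=> [h1 h2]; split; last by apply: Pj_mono.
elim: j => [|j IH]; first by rewrite mul0n addn0.
move=> T V E hG hdeg.
case: (classic (exists2 v, v \in V & Pj P m j.+1 T V E v)) => // N; exfalso.
set X := [set y in V | pb (Pj P m j T V E y)].
have few : forall v, v \in V -> #|[set y | (v,y) \in E] :&: X| < m.
  move=> v vV; rewrite ltnNge; apply/negP => H; apply: N; exists v => //.
  exists ([set y | (v,y) \in E] :&: X); split => // y; rewrite !inE.
  by case/andP=> -> /andP[_ /pbP].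
case: hG => hne hEV hloop.
case: (set_0Vmem (V :\: X)) => [h0 | [w hw]].
  have [v vV] := set0Pn _ hne.
  have := few v vV; have := hdeg v vV; rewrite /outdeg.
  have -> : [set y | (v, y) \in E] :&: X = [set y | (v, y) \in E].
    apply/setP => y; rewrite !inE; case e: ((v,y) \in E) => //=.
    have /andP[_ yV] := hEV _ _ e.
    apply/negPn/negP => yX.
    have : y \in V :\: X by rewrite inE yV andbT; rewrite /X inE.
    by rewrite h0 inE.
  lia.
set V' := V :\: X.
set E' := [set p in E | (p.1 \in V') && (p.2 \in V')].
have hG' : digraph V' E'.
  split.
  - by apply/set0Pn; exists w.
  - by move=> x y; rewrite inE /= => /andP[_ ->].
  - by move=> x; rewrite inE negb_and hloop.
have hdeg' : min_outdeg_ge V' E' (d + j * m).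
  move=> x xV'.
  have xV : x \in V by move: xV'; rewrite inE => /andP[].
  have := hdeg x xV; have := few x xV; rewrite /outdeg.
  have sub : [set y | (x, y) \in E] \subset
      [set y | (x, y) \in E'] :|: ([set y | (x,y) \in E] :&: X).
    apply/subsetP => y; rewrite !inE => e; rewrite e /=.
    have /andP[_ yV] := hEV _ _ e.
    move: xV'; rewrite !inE xV yV /= andbT => ->.
    by case: (pb _).
  have := subset_leq_card sub; have := cardsU [set y | (x, y) \in E'] ([set y | (x,y) \in E] :&: X).
  rewrite mulSn; lia.
have [v vV' pv] := IH T V' E' hG' hdeg'.
have sg : subgraph V' E' V E.
  split; first by apply: subsetDl.
  by apply/subsetP => p; rewrite inE => /andP[].
have hG0 : digraph V E by [].
have pvG := Pj_mono h2 hG0 hG' sg vV' pv.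
move: vV'; rewrite inE => /andP[/negP nX vV]; apply: nX.
by rewrite inE vV; apply/pbP.
Qed.

Fixpoint tsz (l j : nat) : nat := match j with 0 => 1 | j'.+1 => (l * tsz l j').+1 end.

Lemma tsz_gt0 l j : 0 < tsz l j. Proof. by case: j. Qed.

Lemma tsz_lt l j : 2 <= l -> tsz l j < 2 * l ^ j.
Proof.
move=> hl; elim: j => [|j IH] //=; rewrite expnS.
have : l * (tsz l j).+1 <= l * (2 * l ^ j) by rewrite leq_mul2l IH orbT.
nia.
Qed.

Record Emb (T : finType) (V : {set T}) (E : {set T * T}) (P : vertex_property)
  (l j : nat) (v : T) (f : seq 'I_l -> T) (I : {set T}) : Prop := {
  e_root : f [::] = v;
  e_inj : forall s t, size s <= j -> size t <= j -> f s = f t -> s = t;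
  e_img : forall s, size s <= j -> f s \in I;
  e_sub : I \subset V;
  e_card : #|I| <= tsz l j;
  e_edge : forall s (i : 'I_l), size s < j -> (f s, f (rcons s i)) \in E;
  e_leaf : forall s, size s = j -> P T V E (f s) }.

Lemma build P m l T (V : {set T}) E (hG : digraph V E) j : forall (v : T) (F : {set T}),
  Pj P m j T V E v -> v \in V -> v \notin F -> #|F| + tsz l j <= m ->
  exists (f : seq 'I_l -> T) (I : {set T}), @Emb T V E P l j v f I /\ (forall x, x \in I -> x \notin F).
Proof.
have [_ hEV _] := hG.
elim: j => [|j IH] v F.
  move=> pv vV vF _; exists (fun _ => v), [set v]; split; last first.
    by move=> x; rewrite inE => /eqP ->.
  split => //=; try by [case=> [|??] [|??] //= | move=> s _; rewrite inE | rewrite sub1set | rewrite cards1 | move=> [|??] [|??] ].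
move=> [S [hS hy]] vV vF hF.
have inner : forall i, i <= l -> exists (g : nat -> seq 'I_l -> T) (J : {set T}),
   [/\ #|J| <= i * tsz l j, J \subset V, v \notin J, (forall x, x \in J -> x \notin F) &
   (forall c, c < i -> (v, g c [::]) \in E /\ exists Ic, @Emb T V E P l j (g c [::]) (g c) Ic /\ Ic \subset J)]
   /\ (forall c1 c2 s t, c1 < i -> c2 < i -> size s <= j -> size t <= j -> g c1 s = g c2 t -> c1 = c2).
  elim=> [|i IHi] hi.
    exists (fun _ _ => v), set0; split => //; split => //; rewrite ?cards0 ?sub0set ?inE //.
    by move=> x; rewrite inE.
  have [g [J [[cJ sJ vJ dJ hc] hd]]] := IHi (ltnW hi).
  set F' := F :|: (v |: J).
  have cardF' : #|F'| <= #|F| + 1 + i * tsz l j.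
    rewrite /F' cardsU cardsU1; move: cJ; case: (v \notin J) => /=; lia.
  have lm : l * tsz l j <= m - #|F| - 1 by move: hF => /=; lia.
  have il : i.+1 * tsz l j <= l * tsz l j by rewrite leq_mul2r hi orbT.
  have tp := tsz_gt0 l j.
  have : 0 < #|S :\: F'|.
    rewrite cardsD; have := subset_leq_card (subsetIr S F'); lia.
  rewrite card_gt0 => /set0Pn [c]; rewrite inE => /andP[cnF cS].
  have [e pc] := hy c cS.
  have cV : c \in V by have /andP[] := hEV _ _ e.
  have [fc [Ic [emb dc]]] := IH c F' pc cV cnF ltac:(lia).
  exists (fun x => if x == i then fc else g x), (J :|: Ic).
  have gJ : forall c s, c < i -> size s <= j -> g c s \in J.
    move=> c0 s c0i ss; have [_ [I0 [em0 sI0]]] := hc c0 c0i.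
    by apply: (subsetP sI0); apply: (e_img em0).
  split; first split.
  - have := e_card emb; rewrite cardsU mulSn; lia.
  - by rewrite subUset sJ (e_sub emb).
  - rewrite inE negb_or vJ /=; apply/negP => vI; have := dc v vI.
    by rewrite /F' !inE eqxx orbT.
  - move=> x; rewrite inE => /orP[/dJ //| xI]; have := dc x xI.
    by rewrite /F' inE negb_or => /andP[].
  - move=> c0; rewrite ltnS leq_eqVlt => /orP[/eqP -> | c0i].
      rewrite eqxx (e_root emb); split; first exact: e. exists Ic; split; first exact: emb.
      by apply: subsetUr.
    rewrite (ltn_eqF c0i); have [e0 [I0 [em0 sI0]]] := hc c0 c0i; split => //.
    exists I0; split => //; apply: (subset_trans sI0); apply: subsetUl.
  - move=> c1 c2 s t; rewrite ltnS leq_eqVlt => /orP[/eqP -> | c1i];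
      rewrite ltnS leq_eqVlt => /orP[/eqP -> | c2i] ss st //;
      rewrite ?eqxx ?(ltn_eqF c1i) ?(ltn_eqF c2i).
    + move=> eq; have := dc _ (e_img emb ss); rewrite eq /F' !inE gJ //.
      by rewrite !orbT.
    + move=> eq; have := dc _ (e_img emb st); rewrite -eq /F' !inE gJ //.
      by rewrite !orbT.
    + by apply: hd.
have [g [J [[cJ sJ vJ dJ hc] hd]]] := inner l (leqnn l).
pose f (s : seq 'I_l) := if s is x :: s' then g x s' else v.
have gJ : forall (x : 'I_l) s, size s <= j -> g x s \in J.
  move=> x s ss; have [_ [I0 [em0 sI0]]] := hc x (ltn_ord x).
  by apply: (subsetP sI0); apply: (e_img em0).
exists f, (v |: J); split; last first.
  by move=> x; rewrite !inE => /orP[/eqP -> //|/dJ].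
split => //.
- move=> [|x s] [|y t] //= ss st.
  + move=> eq; have := gJ y t st; rewrite -eq => vJ'; by rewrite vJ' in vJ.
  + move=> eq; have := gJ x s ss; rewrite eq => vJ'; by rewrite vJ' in vJ.
  + move=> eq; have xy := hd x y s t (ltn_ord x) (ltn_ord y) ss st eq.
    have exy : x = y by apply: val_inj.
    subst y; have [_ [I0 [em0 _]]] := hc x (ltn_ord x).
    by rewrite (e_inj em0 ss st eq).
- move=> [|x s] /= ss; first by rewrite setU11.
  by rewrite inE gJ ?orbT.
- by rewrite subUset sub1set vV sJ.
- rewrite cardsU1 /=; move: cJ; case: (v \notin J) => /=; lia.
- move=> [|x s] i /= ss.
    by have [] := hc i (ltn_ord i).
  have [_ [I0 [em0 _]]] := hc x (ltn_ord x).
  by apply: (e_edge em0).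
- move=> [|x s] //= [ss].
  have [_ [I0 [em0 _]]] := hc x (ltn_ord x).
  by apply: (e_leaf em0).
Qed.

Theorem theorem3p5 (P : vertex_property) (d k l : nat)
  (hP : delta_common P d) (hk : 1 <= k) (hl : 2 <= l)
  (T : finType) (V : {set T}) (E : {set T * T})
  (hG : digraph V E) (hdeg : min_outdeg_ge V E (d + 2 * k * l ^ k)) :
  exists f : seq 'I_l -> T,
    @outtree_embedding T V E k l f /\
    (forall s, @outtree_leaf k l s -> P T V E (f s)).
Proof.
pose m := 2 * l ^ k.
have hc := @Pj_common P d m k hP.
have hdeg' : min_outdeg_ge V E (d + k * m) by rewrite /m mulnCA mulnA.
have [r rV pr] := hc.1 T V E hG hdeg'.
have tl := tsz_lt k hl.
have [f [I [emb _]]] := @build P m l T V E hG k r set0 pr rV ltac:(by rewrite in_set0)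
   ltac:(rewrite cards0 add0n; exact: ltnW).
have cI : #|I| < #|T|.
  have hm : l ^ k <= k * l ^ k by rewrite leq_pmull.
  have := e_card emb; have := hdeg r rV; rewrite /outdeg.
  have := max_card [set y | (r, y) \in E]; rewrite /m; lia.
have /set0Pn [z] : ~: I != set0.
  by rewrite -card_gt0; have := cardsC I; lia.
rewrite inE => zI.
exists (fun s => if size s <= k then f s else z); split.
  split.
  - move=> s; rewrite unfold_in /outtree_vertex => ss t; rewrite ss.
    case: ifP => st eq; first by apply: (e_inj emb).
    by move: zI; rewrite -eq (e_img emb ss).
  - move=> s hs; have ss : size s <= k := hs; rewrite ss; apply: (subsetP (e_sub emb)); exact: (e_img emb).
  - move=> s i hs; rewrite (ltnW hs) size_rcons hs; exact: (e_edge emb).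
move=> s hs0; have /eqP hs : size s == k := hs0; rewrite hs leqnn; exact: (e_leaf emb).
Qed.
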